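(* Let $K$ be a finite simplicial complex, $n$ a positive integer, $\sigma_1,\ldots,\sigma_m$ the $(n+1)$-simplices of $K$, and $f$ a generic injective filtration function on $K$. Let $\alpha$ be an $n$-cycle whose class $[\alpha]\in H_n(K^f_a)$ is born at $a$ and terminated at a finite value $b>a$, let $D=(0,\frac{b-a}{2}]$, and let $\Sigma_\varepsilon$ ($\varepsilon\in D$) be as in the context. Assume $|\Sigma_x|\ge 2$ for some $x\in D$. Let $t_0=\max\{x\in D: |\Sigma_x|=1\}$ and write $\Sigma_{t_0}=\{\Delta_1\}$. Then there exist indices $i,j$ with $f(\sigma_j)-t_0=f(\sigma_i)+t_0$. Choose $t\in D$, $t>t_0$, such that $|\Sigma_t|=\lim_{x\searrow t_0}|\Sigma_x|$. Then: (1) $\Delta_1\in\{\sigma_i,\sigma_j\}$; (2) for every $s<t_0$, $\Delta_1$ is a maximal simplex of $K^f_{f(\Delta_1)+2s}$ (i.e. it is not a proper face of any simplex of $K^f_{f(\Delta_1)+2s}$); (3) if $\Delta_1=\sigma_j$, then $\{\sigma_i,\sigma_j\}\subseteq\Sigma_t$ and $\sigma_i$ is a terminal simplex in $K^f$ (it terminates a nontrivial homology class); (4) if $\Delta_1=\sigma_i$, then $\{\sigma_i,\sigma_j\}\subseteq\Sigma_t$ and $\sigma_j$ is a birth simplex in $K^f$ (it creates a nontrivial homology class).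
   Context: A filtration function on a finite simplicial complex $K$ is a map $f\colon K\to\mathbb{R}$ with $f(\sigma)\le f(\tau)$ whenever $\sigma$ is a face of $\tau$. An injective filtration function $f$ is generic if $|f(\sigma_i)-f(\sigma_j)|=|f(\sigma_{i'})-f(\sigma_{j'})|$ with $i\ne j$, $i'\ne j'$ implies $\{i,j\}=\{i',j'\}$. Sublevel complexes are $K^f_r=f^{-1}((-\infty,r])$; homology is with coefficients in a fixed field. For a nontrivial class $[\alpha]\in H_n(K^f_r)$, its birth is the infimum of $q\le r$ such that $[\alpha]$ is in the image of $H_n(K^f_q)\to H_n(K^f_r)$, and its termination scale is the infimum of $q\ge r$ such that $[\alpha]$ maps to $0$ in $H_n(K^f_q)$. Since $f$ is injective, each simplex $\sigma$ either is a birth simplex (adding it to $K^f_{<f(\sigma)}$ creates a new nontrivial homology class, i.e. $\partial\sigma$ is already a boundary there) or a terminal simplex (adding it makes a nontrivial homology class trivial). $\|f-g\|_\infty=\max_{\sigma\in K}|f(\sigma)-g(\sigma)|$. An injective $\varepsilon$-perturbation of $f$ is an injective filtration function $g$ with $\|f-g\|_\infty\le\varepsilon$. For such $g$, $\Delta_{g,\alpha}$ is the simplex $\tau$ such that $\alpha$ is a boundary in $K^g_{g(\tau)}$ but not in $K^g_r$ for $r<g(\tau)$, and $\Sigma_\varepsilon=\{\Delta_{g,\alpha}: g\text{ an injective }\varepsilon\text{-perturbation of }f\}$. *)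

(* Defs.v *)
From HB Require Import structures.
From mathcomp Require Import all_boot all_order all_algebra.
From mathcomp Require Import all_classical all_reals all_analysis.
Set Implicit Arguments. Unset Strict Implicit. Unset Printing Implicit Defensive.
Import Order.TTheory GRing.Theory Num.Theory.
Local Open Scope ring_scope.

Section Simplicial.
Variables (V : finType) (F : fieldType) (R : realType).

(* A finite abstract simplicial complex on vertex set V: a set of nonempty
   vertex sets closed under nonempty subsets.  dim sigma = #|sigma| - 1. *)
Definition simplicial_complex (K : {set {set V}}) : Prop :=
  (forall s, s \in K -> s != finset.set0) /\
  (forall s t : {set V}, s \in K -> t \subset s -> t != finset.set0 -> t \in K).

Definition chain := {ffun {set V} -> F}.

(* incidence number [s : t] with the orientation induced by enum_rank *)
Definition incidence (s t : {set V}) : F :=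
  \sum_(v in s | t == s :\ v)
     (-1) ^+ #|[set w in s | (enum_rank w < enum_rank v)%N]|.

Definition bd (c : chain) : chain :=
  [ffun t => \sum_(s : {set V}) c s * incidence s t].

Definition elem (s : {set V}) : chain := [ffun t => (t == s)%:R].

Definition chain_in (L : {set {set V}}) (k : nat) (c : chain) : Prop :=
  forall t, c t != 0 -> t \in L /\ #|t| = k.+1.

Definition is_cycle (L : {set {set V}}) (k : nat) (c : chain) : Prop :=
  chain_in L k c /\ bd c = 0.

Definition is_boundary (L : {set {set V}}) (k : nat) (c : chain) : Prop :=
  exists d : chain, chain_in L k.+1 d /\ bd d = c.

Definition filtration (K : {set {set V}}) (f : {set V} -> R) : Prop :=
  forall s t : {set V}, s \in K -> t \in K -> s \subset t -> f s <= f t.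

Definition injective_on (K : {set {set V}}) (f : {set V} -> R) : Prop :=
  {in K &, injective f}.

Definition generic (K : {set {set V}}) (f : {set V} -> R) : Prop :=
  injective_on K f /\
  forall s t s' t', s \in K -> t \in K -> s' \in K -> t' \in K ->
    s != t -> s' != t' -> `|f s - f t| = `|f s' - f t'| ->
    (s = s' /\ t = t') \/ (s = t' /\ t = s').

Definition sublevel (K : {set {set V}}) (f : {set V} -> R) (r : R) :
  {set {set V}} := [set s in K | f s <= r].

Definition sublevel_lt (K : {set {set V}}) (f : {set V} -> R) (r : R) :
  {set {set V}} := [set s in K | f s < r].

(* [alpha] in H_k(K^f_r) lies in the image of H_k(K^f_q) -> H_k(K^f_r) *)
Definition in_image K f k (alpha : chain) (q r : R) : Prop :=
  exists beta : chain, is_cycle (sublevel K f q) k beta /\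
    is_boundary (sublevel K f r) k (alpha - beta).

Local Open Scope classical_set_scope.

Definition birth K f k (alpha : chain) (r : R) : R :=
  inf [set q : R | q <= r /\ in_image K f k alpha q r].

Definition death_set K f k (alpha : chain) (r : R) : set R :=
  [set q : R | r <= q /\ is_boundary (sublevel K f q) k alpha].

Definition termination K f k (alpha : chain) (r : R) : R :=
  inf (death_set K f k alpha r).

Local Close Scope classical_set_scope.

Definition birth_simplex K f (s : {set V}) : Prop :=
  is_boundary (sublevel_lt K f (f s)) (#|s|.-2) (bd (elem s)).

Definition terminal_simplex K f (s : {set V}) : Prop :=
  ~ birth_simplex K f s.

Definition inj_perturbation (K : {set {set V}}) (f g : {set V} -> R) (eps : R) : Prop :=
  filtration K g /\ injective_on K g /\
  forall s, s \in K -> `|f s - g s| <= eps.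

Definition Delta_is (K : {set {set V}}) (g : {set V} -> R) k (alpha : chain) (tau : {set V})
  : Prop :=
  tau \in K /\ is_boundary (sublevel K g (g tau)) k alpha /\
  forall r, r < g tau -> ~ is_boundary (sublevel K g r) k alpha.

Definition Sigma (K : {set {set V}}) f k (alpha : chain) (eps : R) : {set {set V}} :=
  [set tau | `[< exists g, inj_perturbation K f g eps /\
                           Delta_is K g k alpha tau >]].

Definition maximal_in (L : {set {set V}}) (s : {set V}) : Prop :=
  forall t : {set V}, t \in L -> ~ (s \proper t).

End Simplicial.

(* Main.v *)
From Pilot Require Import Defs.
From HB Require Import structures.
From mathcomp Require Import all_boot all_order all_algebra.
From mathcomp Require Import all_classical all_reals all_analysis.
Import Order.TTheory GRing.Theory Num.Theory.
Import numFieldNormedType.Exports.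
From mathcomp Require Import ring lra.

Module PilotHelpers.
Set Implicit Arguments. Unset Strict Implicit. Unset Printing Implicit Defensive.

Ltac clra := repeat match goal with H : ?T |- _ => match type of T with Prop => clear H end end; lra.

Section Bd.
Local Open Scope ring_scope.
Variables (V : finType) (F : fieldType).

Definition sg (c : {set V}) (v : V) : F :=
  (-1) ^+ #|[set w in c | (enum_rank w < enum_rank v)%N]|.

Lemma bd_comb (x y : chain V F) (k : F) :
  bd [ffun t => x t - k * y t] = [ffun t => bd x t - k * bd y t].
Proof.
apply/ffunP => t; rewrite !ffunE mulr_sumr -sumrB; apply: eq_bigr => s _.
by rewrite ffunE; ring.
Qed.

Lemma bd_elem (c : {set V}) : bd (elem F c) = [ffun t => incidence F c t].
Proof.
apply/ffunP => t; rewrite !ffunE (bigD1 c) //= ffunE eqxx mul1r big1 ?addr0 //.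
by move=> s /negPf Hs; rewrite ffunE Hs mul0r.
Qed.

Lemma sg_rm_gt (c : {set V}) (u v : V) : (enum_rank u < enum_rank v)%N -> sg (c :\ v) u = sg c u.
Proof.
move=> Huv.
have E : [set w in c :\ v | (enum_rank w < enum_rank u)%N] =
         [set w in c | (enum_rank w < enum_rank u)%N].
  apply/finset.setP => w; rewrite !inE.
  case: (eqVneq w v) => [->|] //=.
  by rewrite ltnNge (ltnW (leq_trans Huv (leqnn _))) !andbF.
by rewrite /sg E.
Qed.

Lemma sg_rm_lt (c : {set V}) (u v : V) : u \in c -> (enum_rank u < enum_rank v)%N -> sg (c :\ u) v = - sg c v.
Proof.
move=> Huc Huv; rewrite /sg.
have -> : [set w in c | (enum_rank w < enum_rank v)%N] =
          u |: [set w in c :\ u | (enum_rank w < enum_rank v)%N].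
  apply/finset.setP => w; rewrite !inE; case: (eqVneq w u) => [->|] //=.
  by rewrite Huc Huv.
by rewrite cardsU1 !inE eqxx /= add1n exprS mulN1r opprK.
Qed.

Lemma sg_swap (c : {set V}) (u v : V) : u \in c -> v \in c -> u != v ->
  sg c u * sg (c :\ u) v = - (sg c v * sg (c :\ v) u).
Proof.
move=> Hu Hv Huv.
have Hr : (nat_of_ord (enum_rank u)) != enum_rank v by apply: contra Huv => /eqP/ord_inj/enum_rank_inj ->.
case: (ltngtP (enum_rank u) (enum_rank v)) => [H|H|H]; last by move: Hr; rewrite H eqxx.
  by rewrite (sg_rm_lt Hu H) (@sg_rm_gt c _ _ H); ring.
by rewrite (sg_rm_lt Hv H) (@sg_rm_gt c _ _ H); ring.
Qed.

Lemma bdbd (c t : {set V}) : bd (bd (elem F c)) t = 0.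
Proof.
rewrite bd_elem /bd ffunE.
under eq_bigr do rewrite ffunE.
have step : \sum_s incidence F c s * incidence F s t =
            \sum_(v in c) sg c v * incidence F (c :\ v) t.
  under eq_bigr do rewrite /incidence big_distrl /=.
  rewrite (exchange_big_dep (fun v => v \in c)) /=; last by move=> s v _ /andP[].
  apply: eq_bigr => v Hv; rewrite (big_pred1 (c :\ v)) //.
  by move=> s /=; rewrite Hv.
rewrite step; clear step.
pose G v u := if (v \in c) && (u \in c :\ v) && (t == c :\ v :\ u)
              then sg c v * sg (c :\ v) u else 0.
have E1 : \sum_(v in c) sg c v * incidence F (c :\ v) t = \sum_v \sum_u G v u.
  rewrite big_mkcond; apply: eq_bigr => v _ /=.
  case Hv: (v \in c).
    rewrite /incidence big_distrr big_mkcond; apply: eq_bigr => u _ /=.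
    by rewrite /G Hv /=; case: ifP.
  by rewrite big1 // => u _; rewrite /G Hv.
rewrite E1; clear E1.
pose A v u := if (enum_rank u < enum_rank v)%N then G v u else 0.
have Gsplit : forall v u, G v u = A v u + A u v * (-1).
  move=> v u; rewrite /A.
  have [->|Huv] := eqVneq u v.
    by rewrite ltnn /G !inE eqxx /= andbF mul0r addr0.
  have Hr : (nat_of_ord (enum_rank u)) != enum_rank v by apply: contra Huv => /eqP/ord_inj/enum_rank_inj ->.
  have Ganti : G u v = - G v u.
    rewrite /G.
    have Eset : c :\ u :\ v = c :\ v :\ u.
      by apply/finset.setP => w; rewrite !inE; case: (w == u); case: (w == v).
    rewrite Eset !inE (eq_sym v u) Huv /=.
    case Hv: (v \in c); case Hu: (u \in c) => /=; rewrite ?oppr0 //.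
    case: (t == c :\ v :\ u); rewrite ?oppr0 //.
    by rewrite sg_swap // eq_sym.
  case: (ltngtP (enum_rank u) (enum_rank v)) => [H|H|H]; last by move: Hr; rewrite H eqxx.
    by rewrite mul0r addr0.
  by rewrite add0r Ganti; ring.
under eq_bigr do under eq_bigr do rewrite Gsplit.
under eq_bigr do rewrite big_split /=.
rewrite big_split /= [X in _ + X]exchange_big /=.
rewrite -big_split /=; apply: big1 => v _; rewrite -big_split /=.
by apply: big1 => u _; ring.
Qed.

End Bd.


Section Aux.
Local Open Scope ring_scope.
Variables (V : finType) (F : fieldType) (R : realType).

Lemma ex_minr (T : finType) (A : {set T}) (phi : T -> R) :
  A != finset.set0 -> exists2 w, w \in A & forall p, p \in A -> phi w <= phi p.
Proof.
case/set0Pn => x Hx.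
case: (@arg_minP _ _ _ x (mem A) phi Hx) => w Hw Hmin.
by exists w.
Qed.

Lemma ex_maxr (T : finType) (A : {set T}) (phi : T -> R) :
  A != finset.set0 -> exists2 w, w \in A & forall p, p \in A -> phi p <= phi w.
Proof.
case/set0Pn => x Hx.
case: (@arg_maxP _ _ _ x (mem A) phi Hx) => w Hw Hmax.
by exists w.
Qed.

Lemma ex_upper (T : finType) (A : {set T}) (phi : T -> R) c :
  (forall p, p \in A -> phi p < c) ->
  exists2 r, r < c & forall p, p \in A -> phi p <= r.
Proof.
move=> H; have [->|nA] := eqVneq A finset.set0.
  by exists (c - 1); [lra | move=> p; rewrite inE].
have [w Hw Hm] := ex_maxr phi nA.
by exists (phi w); [exact: H | exact: Hm].
Qed.

Lemma ex_pos_lower (T : finType) (A : {set T}) (phi : T -> R) :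
  (forall p, p \in A -> 0 < phi p) ->
  exists2 m, 0 < m & forall p, p \in A -> m <= phi p.
Proof.
move=> H; have [->|nA] := eqVneq A finset.set0.
  by exists 1; [lra | move=> p; rewrite inE].
have [w Hw Hm] := ex_minr phi nA.
by exists (phi w); [exact: H | exact: Hm].
Qed.

Variable K : {set {set V}}.
Variable n : nat.
Variable alpha : chain V F.

Definition PP : {set {set V}} := locked [set p in K | #|p| == n.+2].

Lemma inPP p : (p \in PP) = (p \in K) && (#|p| == n.+2).
Proof. by rewrite /PP -lock inE. Qed.

Definition Kill (S : {set {set V}}) : Prop :=
  exists d : chain V F, (forall t, d t != 0 -> t \in S) /\ bd d = alpha.

Lemma Kill_mono (S S' : {set {set V}}) : S \subset S' -> Kill S -> Kill S'.
Proof.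
move=> /fintype.subsetP sub [d [Hd Hb]]; exists d; split => // t /Hd; exact: sub.
Qed.

Lemma bnd_Kill (L : {set {set V}}) : is_boundary L n alpha <-> Kill [set p in L | #|p| == n.+2].
Proof.
split.
  case=> d [Hd Hb]; exists d; split => // t /Hd [H1 H2].
  by rewrite inE H1 H2 eqxx.
case=> d [Hd Hb]; exists d; split => // t /Hd; rewrite inE => /andP[H1 /eqP H2].
by [].
Qed.

Lemma first_kill (S : {set {set V}}) (rho : {set V} -> R) :
  Kill S -> ~ Kill finset.set0 ->
  exists2 w, w \in S & Kill [set p in S | rho p <= rho w] /\
                       ~ Kill [set p in S | rho p < rho w].
Proof.
move=> KS K0.
have nS : S != finset.set0 by apply/negP => /eqP E; apply: K0; rewrite -E.
pose W := [set w in S | `[< Kill [set p in S | rho p <= rho w] >]].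
have nW : W != finset.set0.
  have [w Hw Hm] := ex_maxr rho nS.
  apply/set0Pn; exists w; rewrite inE Hw /=; apply/asboolP.
  apply: Kill_mono KS; apply/fintype.subsetP => p Hp; rewrite inE Hp /=; exact: Hm.
have [w0 Hw0 Hmin] := ex_minr rho nW.
move: Hw0; rewrite inE => /andP[Hw0S /asboolP Hk].
exists w0 => //; split => // KA.
set A := [set p in S | rho p < rho w0] in KA.
have nA : A != finset.set0 by apply/negP => /eqP E; apply: K0; rewrite -E.
have [w' Hw' Hm'] := ex_maxr rho nA.
have : w' \in W.
  move: (Hw'); rewrite inE => /andP[Hw'S _].
  rewrite inE Hw'S /=; apply/asboolP; apply: Kill_mono KA.
  apply/fintype.subsetP => p Hp; move: (Hp); rewrite /A inE => /andP[HpS _].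
  by rewrite inE HpS /=; apply: Hm'.
move/Hmin; move: Hw'; rewrite inE => /andP[_ ]; lra.
Qed.


Lemma clamp_mono (x x' a a' b b' : R) : x <= x' -> a <= a' -> b <= b' ->
  Num.max (Num.min x a) b <= Num.max (Num.min x' a') b'.
Proof.
move=> *; rewrite /Num.max /Num.min.
case: (ltP x a) => ?; case: (ltP x' a') => ?; case: ltP => ?; case: ltP => ?; lra.
Qed.

Lemma clamp_bound (x a b c : R) : x - a <= c -> b - x <= c -> 0 <= c ->
  `|Num.max (Num.min x a) b - x| <= c.
Proof.
move=> *; rewrite ler_norml; rewrite /Num.max /Num.min.
case: (ltP x a) => ?; case: ltP => ?; lra.
Qed.

Definition Pairs (f : {set V} -> R) (e : R) (L : {set {set V}}) (tau : {set V}) : Prop :=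
  forall p u, p \in PP -> u \in PP -> (p \in L) || (p == tau) -> u \notin L ->
    f p - f u < 2 * e.

Definition Adm (f : {set V} -> R) (e : R) (tau : {set V}) (L : {set {set V}}) : Prop :=
  [/\ tau \in PP, tau \notin L & L \subset PP] /\
  [/\ Kill (tau |: L), ~ Kill L & Pairs f e L tau].

Lemma PP_eq p q : p \in PP -> q \in PP -> p \subset q -> p = q.
Proof.
rewrite !inPP => /andP[_ /eqP Hp] /andP[_ /eqP Hq] Hs.
by apply/eqP; rewrite eqEcard Hs Hp Hq leqnn.
Qed.

Lemma Sig_Adm (f : {set V} -> R) e tau : 0 < e ->
  tau \in Sigma K f n alpha e -> exists L, Adm f e tau L.
Proof.
move=> e0; rewrite inE => /asboolP [g [[Hgfil [Hginj Hclose]] [HtK [Hb Hnb]]]].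
have key : forall A : {set {set V}}, (forall p, p \in A -> p \in K /\ g p < g tau) ->
    ~ Kill [set p in A | #|p| == n.+2].
  move=> A HA KA.
  have [r Hr Hpr] := @ex_upper _ A g (g tau) (fun p Hp => (HA p Hp).2).
  apply: (Hnb r Hr); apply/bnd_Kill; apply: Kill_mono KA.
  apply/fintype.subsetP => p; rewrite !inE => /andP[HpA ->]; rewrite andbT.
  by rewrite (HA p HpA).1 /= Hpr.
have HtP : tau \in PP.
  rewrite inPP HtK /=; apply/negPn/negP => Hsz.
  apply: (key [set p in K | g p < g tau]).
    by move=> p; rewrite inE => /andP[].
  move/bnd_Kill: Hb; apply: Kill_mono.
  apply/fintype.subsetP => p; rewrite !inE => /andP[/andP[HpK Hgp] Hsp].
  rewrite HpK Hsp andbT /= lt_neqAle Hgp andbT.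
  apply/negP => /eqP E; move: (Hginj p tau HpK HtK E) => Ept.
  by move: Hsp Hsz; rewrite Ept => ->.
exists [set p in PP | g p < g tau]; split; split => //.
- by rewrite inE ltxx andbF.
- by apply/fintype.subsetP => p; rewrite inE => /andP[].
- move/bnd_Kill: Hb; apply: Kill_mono.
  apply/fintype.subsetP => p; rewrite !inE => /andP[/andP[HpK Hgp] Hsp].
  have [->|Hpt] := eqVneq p tau; first by [].
  rewrite inPP HpK Hsp /= lt_neqAle Hgp andbT.
  by apply/negP => /eqP E; move: (Hginj p tau HpK HtK E); apply/eqP.
- move=> KL; apply: (key [set p in PP | g p < g tau]).
    by move=> p; rewrite !inE inPP => /andP[/andP[-> _] ->].
  apply: Kill_mono KL; apply/fintype.subsetP => p Hp.
  by rewrite inE Hp /=; move: Hp; rewrite !inE inPP => /andP[/andP[_ ->]].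
- move=> p u HpP HuP Hp Hu.
  have HpK : p \in K by move: HpP; rewrite inPP => /andP[].
  have HuK : u \in K by move: HuP; rewrite inPP => /andP[].
  have Hgp : g p <= g tau.
    case/orP: Hp => [|/eqP->//]; rewrite inE => /andP[_ /ltW] //.
  have Hgu : g tau <= g u by move: Hu; rewrite inE HuP /= -leNgt.
  have := Hclose p HpK; have := Hclose u HuK; rewrite !ler_norml.
  have [->|Hpu] := eqVneq p u; first by move=> *; lra.
  have Hlt : g p < g u.
    rewrite lt_neqAle (le_trans Hgp Hgu) andbT.
    by apply/negP => /eqP E; move: (Hginj p u HpK HuK E); apply/eqP.
  move=> /andP[? ?] /andP[? ?]; lra.
Qed.


Lemma sum_norm_ge (f : {set V} -> R) v : v \in K -> `|f v| <= \sum_(w in K) `|f w|.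
Proof.
move=> Hv; rewrite (bigD1 v) //=; rewrite lerDl; apply: sumr_ge0 => ? _; exact: normr_ge0.
Qed.

Lemma Adm_Sig (f : {set V} -> R) e tau L :
  filtration K f -> injective_on K f -> 0 < e ->
  Adm f e tau L -> tau \in Sigma K f n alpha e.
Proof.
move=> Hfil Hinj e0 [[HtP HtL HLP] [HKill HnKill HPairs]].
have HtK : tau \in K by move: HtP; rewrite inPP => /andP[].
have PK : forall p, p \in PP -> p \in K by move=> p; rewrite inPP => /andP[].
have LP : forall p, p \in L -> p \in PP by move=> p Hp; exact: (fintype.subsetP HLP).
set Lt := tau |: L.
set Uc := PP :\: L.
have nLt : Lt != finset.set0 by apply/set0Pn; exists tau; rewrite !inE eqxx.
have nU : Uc != finset.set0 by apply/set0Pn; exists tau; rewrite finset.in_setD HtP HtL.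
have [pM HpM HmaxM] := ex_maxr f nLt.
have [uM HuM HminM] := ex_minr f nU.
have HpMP : pM \in PP by move: HpM; rewrite finset.in_setU1 => /orP[/eqP->|/LP].
have HuMP : uM \in PP by move: HuM; rewrite finset.in_setD => /andP[].
have Hdiff : f pM - f uM < 2 * e.
  apply: HPairs => //; first by move: HpM; rewrite finset.in_setU1 orbC.
  by move: HuM; rewrite finset.in_setD => /andP[].
have [gam [gam0 gam1 gam2]] : exists gam : R,
    [/\ 0 < gam, gam <= e & gam <= e - (f pM - f uM) / 2].
  exists (Num.min e (e - (f pM - f uM) / 2)); split.
  - by rewrite lt_min e0 /=; move: Hdiff; clra.
  - by rewrite ge_min lexx.
  - by rewrite ge_min lexx orbT.
have [h hE] : exists h : R, h = (f pM + f uM) / 2 by eexists.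
have [eta [eta0 etaE]] : exists eta : R, 0 < eta /\ eta = gam / 4.
  by exists (gam / 4); split => //; move: gam0; clra.
pose Down (v : {set V}) := [exists p in L, v \subset p].
pose Upp (v : {set V}) := [exists u in PP :\: Lt, u \subset v].
have [M [M0 HM]] : exists M : R, 0 <= M /\ forall v, v \in K -> `|f v| <= M.
  exists (\sum_(w in K) `|f w|); split; last by move=> v; exact: sum_norm_ge.
  by apply: sumr_ge0 => ? _; exact: normr_ge0.
have [BIG [hB1 hB2 hB3]] : exists BIG : R,
    [/\ h <= BIG, - BIG <= h - eta & M + 1 <= BIG].
  exists (M + `|h| + eta + 1); split.
  - by move: (ler_norm h) (normr_ge0 h) eta0 M0; clra.
  - have : - h <= `|h| by rewrite -normrN ler_norm.
    by move: (normr_ge0 h) eta0 M0; clra.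
  - by move: (normr_ge0 h) eta0 M0; clra.
pose hi v := if Down v then h - eta else if v \subset tau then h else BIG.
pose lo v := if Upp v then h + eta else if tau \subset v then h else - BIG.
pose g0 v := Num.max (Num.min (f v) (hi v)) (lo v).
have nDt : ~~ Down tau.
  apply/existsP => -[p /andP[HpL Hs]].
  by move: HtL; rewrite (PP_eq HtP (LP _ HpL) Hs) HpL.
have nUt : ~~ Upp tau.
  apply/existsP => -[u /andP[Hu Hs]].
  move: Hu; rewrite !inE => /andP[/norP[Hut HuL] HuP].
  by move: Hut; rewrite (PP_eq HuP HtP Hs) eqxx.
have hi_mono : forall v w : {set V}, v \subset w -> hi v <= hi w.
  move=> v w Hvw; rewrite /hi.
  case Dw: (Down w).
    have -> : Down v.
      case/existsP: Dw => p /andP[HpL Hs]; apply/existsP; exists p.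
      by rewrite HpL (fintype.subset_trans Hvw Hs).
    by [].
  case Tw: (w \subset tau).
    rewrite (fintype.subset_trans Hvw Tw).
    by case: (Down v); move: eta0; clra.
  by case: (Down v); [|case: (v \subset tau)]; move: eta0 hB1; clra.
have lo_mono : forall v w : {set V}, v \subset w -> lo v <= lo w.
  move=> v w Hvw; rewrite /lo.
  case Uv: (Upp v).
    have -> : Upp w.
      case/existsP: Uv => u /andP[Hu Hs]; apply/existsP; exists u.
      by rewrite Hu (fintype.subset_trans Hs Hvw).
    by [].
  case Tv: (tau \subset v).
    rewrite (fintype.subset_trans Tv Hvw).
    by case: (Upp w); move: eta0; clra.
  by case: (Upp w); [|case: (tau \subset w)]; move: eta0 hB2; clra.
have g0_mono : forall v w : {set V}, v \in K -> w \in K -> v \subset w -> g0 v <= g0 w.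
  move=> v w Hv Hw Hvw; apply: clamp_mono; [exact: Hfil|exact: hi_mono|exact: lo_mono].
have g0_close : forall v : {set V}, v \in K -> `|g0 v - f v| <= e - gam + eta.
  move=> v Hv; apply: clamp_bound; last by move: gam1 eta0; clra.
  - rewrite /hi; case: ifP => Dv.
      case/existsP: Dv => p /andP[HpL Hs].
      have := Hfil v p Hv (PK _ (LP _ HpL)) Hs.
      have : f p <= f pM by apply: HmaxM; rewrite !inE HpL orbT.
      by move: hE gam2; clra.
    case: ifP => Tv.
      have := Hfil v tau Hv HtK Tv.
      have : f tau <= f pM by apply: HmaxM; rewrite !inE eqxx.
      by move: hE gam2 eta0; clra.
    have := HM v Hv; have := ler_norm (f v).
    by move: hB3 gam1 eta0; clra.
  - rewrite /lo; case: ifP => Uv.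
      case/existsP: Uv => u /andP[Hu Hs].
      move: Hu; rewrite !inE => /andP[/norP[_ HuL] HuP].
      have := Hfil u v (PK _ HuP) Hv Hs.
      have : f uM <= f u by apply: HminM; rewrite finset.in_setD HuL HuP.
      by move: hE gam2; clra.
    case: ifP => Tv.
      have := Hfil tau v HtK Hv Tv.
      have : f uM <= f tau by apply: HminM; rewrite finset.in_setD HtL HtP.
      by move: hE gam2 eta0; clra.
    have := HM v Hv; have : - f v <= `|f v| by rewrite -normrN ler_norm.
    by move: hB3 gam1 eta0; clra.
have g0_tau : g0 tau = h.
  rewrite /g0 /hi /lo (negbTE nDt) (negbTE nUt) subxx.
  by rewrite /Num.max /Num.min; case: (ltP (f tau) h) => H1; case: ltP => H2; move: H1 H2; clra.
have g0_L : forall p : {set V}, p \in L -> g0 p <= h - eta.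
  move=> p HpL.
  have Dp : Down p by apply/existsP; exists p; rewrite HpL subxx.
  have nUp : ~~ Upp p.
    apply/existsP => -[u /andP[Hu Hs]].
    move: Hu; rewrite !inE => /andP[/norP[_ HuL] HuP].
    by move: HuL; rewrite (PP_eq HuP (LP _ HpL) Hs) HpL.
  have nTp : ~~ (tau \subset p).
    by apply/negP => Hs; move: HtL; rewrite (PP_eq HtP (LP _ HpL) Hs) HpL.
  rewrite /g0 /hi /lo Dp (negbTE nUp) (negbTE nTp).
  move: hB2.
  by rewrite /Num.max /Num.min; case: (ltP (f p) (h - eta)) => H1; case: ltP => H2; move: H1 H2; clra.
have g0_U : forall u : {set V}, u \in PP :\: Lt -> h + eta <= g0 u.
  move=> u Hu.
  have Uu : Upp u by apply/existsP; exists u; rewrite Hu subxx.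
  by rewrite /g0 /lo Uu le_max lexx orbT.
pose A2 := [set vw : {set V} * {set V} | (vw.1 \in K) && (vw.2 \in K) && (g0 vw.1 != g0 vw.2)].
have [m m0 Hm] := @ex_pos_lower _ A2 (fun vw => `|g0 vw.1 - g0 vw.2|)
  (fun vw => ltac:(rewrite inE => /andP[_ H]; by rewrite normr_gt0 subr_eq0)).
have [del [del0 dele delm]] : exists del : R, [/\ 0 < del, del <= eta & del <= m].
  exists (Num.min eta m); split.
  - by rewrite lt_min eta0 m0.
  - by rewrite ge_min lexx.
  - by rewrite ge_min lexx orbT.
have [eps [eps0 epsE]] : exists eps : R, 0 < eps /\ eps * (M + 1) = del / 4.
  exists (del / (4 * (M + 1))); split.
    by rewrite divr_gt0 //; move: M0; clra.
  by field; move: M0; clra.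
have epsf : forall v : {set V}, v \in K -> `|eps * f v| <= del / 4.
  move=> v Hv; rewrite normrM gtr0_norm // -epsE.
  by rewrite ler_pM2l //; move: (HM v Hv); clra.
pose g v := g0 v + eps * f v.
have gL : forall p : {set V}, p \in L -> g p < g tau.
  move=> p HpL; have := g0_L p HpL; have := epsf p (PK _ (LP _ HpL)).
  have := epsf tau HtK; rewrite /g g0_tau !ler_norml.
  by move: dele eta0; clra.
have gU : forall u : {set V}, u \in PP :\: Lt -> g tau < g u.
  move=> u Hu; have := g0_U u Hu.
  have HuP : u \in PP by move: Hu; rewrite finset.in_setD => /andP[].
  have := epsf u (PK _ HuP).
  have := epsf tau HtK; rewrite /g g0_tau !ler_norml.
  by move: dele eta0; clra.
rewrite inE; apply/asboolP; exists g; split; [split; [|split]|split; [|split]].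
- move=> v w Hv Hw Hvw; rewrite /g; apply: lerD; first exact: g0_mono.
  by rewrite ler_pM2l //; exact: Hfil.
- move=> v w Hv Hw; rewrite /g => E.
  have [E0|N0] := eqVneq (g0 v) (g0 w).
    move: E; rewrite E0 => /addrI /mulfI; rewrite gt_eqF // => /(_ isT).
    exact: Hinj.
  have : (v, w) \in A2 by rewrite inE Hv Hw N0.
  move/Hm => /= Hmg; exfalso.
  have Eg : g0 v - g0 w = eps * f w - eps * f v by move: E; clra.
  move: (epsf v Hv) (epsf w Hw); rewrite !ler_norml => /andP[H3 H4] /andP[H5 H6].
  by move: Hmg; rewrite Eg ler_normr => /orP[] H1; move: H1 H3 H4 H5 H6 delm m0; clra.
- move=> v Hv; have := g0_close v Hv; have := epsf v Hv.
  rewrite /g !ler_norml; move: etaE dele gam0 gam1; clra.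
- exact: HtK.
- apply/bnd_Kill; apply: Kill_mono HKill.
  apply/fintype.subsetP => p; rewrite !inE => /orP[/eqP->|HpL].
    by rewrite HtK lexx; move: HtP; rewrite inPP => /andP[_ ->].
  have HpP := LP _ HpL; rewrite (PK _ HpP) /= (ltW (gL _ HpL)).
  by move: HpP; rewrite inPP => /andP[_ ->].
- move=> r Hr /bnd_Kill KS; apply: HnKill; apply: Kill_mono KS.
  apply/fintype.subsetP => p; rewrite !inE => /andP[/andP[HpK Hgp] Hsz].
  have HpP : p \in PP by rewrite inPP HpK Hsz.
  case HpL: (p \in L) => //.
  have [Ept|Hpt] := eqVneq p tau.
    by move: Hgp Hr; rewrite Ept; clra.
  have : p \in PP :\: Lt by rewrite finset.in_setD HpP !inE (negbTE Hpt) HpL.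
  by move/gU; move: Hgp Hr; clra.
Qed.


Lemma Sig_mono (f : {set V} -> R) e e' tau : e <= e' ->
  tau \in Sigma K f n alpha e -> tau \in Sigma K f n alpha e'.
Proof.
move=> Hee; rewrite !inE => -[g [[H1 [H2 H3]] H4]].
exists g; split; last exact: H4.
split; first exact: H1. split; first exact: H2.
move=> s Hs; exact: le_trans (H3 s Hs) Hee.
Qed.

Lemma Kill_subst (S : {set {set V}}) (E : chain V F) tau :
  (forall t, bd E t = 0) -> E tau != 0 -> Kill S ->
  Kill ((S :|: [set t | E t != 0]) :\ tau).
Proof.
move=> HE Et [d [Hd Hb]].
exists [ffun t => d t - (d tau / E tau) * E t]; split.
  move=> t; rewrite ffunE => Ht.
  have [Ett|Ntt] := eqVneq t tau.
    by move: Ht; rewrite Ett divfK // subrr eqxx.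
  rewrite !inE Ntt /=.
  case Hdt: (d t != 0); first by rewrite (Hd _ Hdt).
  apply/orP; right; apply: contraNN Ht => /eqP ->.
  by move/negbFE/eqP: Hdt => ->; rewrite mulr0 subrr.
rewrite bd_comb; apply/ffunP => t; rewrite ffunE HE mulr0 subr0.
by rewrite Hb.
Qed.

End Aux.

End PilotHelpers.
Import PilotHelpers.
Unset Implicit Arguments. Set Strict Implicit. Set Printing Implicit Defensive.

Ltac clra := repeat match goal with H : ?T |- _ => match type of T with Prop => clear H end end; lra.
Local Open Scope classical_set_scope.
Local Open Scope ring_scope.

Theorem proposition3p4 (V : finType) (F : fieldType) (R : realType)
  (K : {set {set V}}) (n : nat) (f : {set V} -> R)
  (alpha : chain V F) (a b : R) :
  simplicial_complex K -> (0 < n)%N ->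
  filtration K f -> generic K f ->
  (* [alpha] is a nontrivial class of H_n(K^f_a) *)
  is_cycle (sublevel K f a) n alpha ->
  ~ is_boundary (sublevel K f a) n alpha ->
  (* born at a, terminated at the finite value b > a *)
  birth K f n alpha a = a ->
  (exists q, death_set K f n alpha a q) ->
  termination K f n alpha a = b ->
  a < b ->
  let D := fun x : R => 0 < x <= (b - a) / 2 in
  let Sig := Sigma K f n alpha in
  (exists x, D x /\ (2 <= #|Sig x|)%N) ->
  forall t0 : R, D t0 -> #|Sig t0| = 1%N ->
  (forall x, D x -> #|Sig x| = 1%N -> x <= t0) ->
  forall Delta1 : {set V}, Sig t0 = [set Delta1]%SET ->
  exists si sj : {set V},
    [/\ si \in K, #|si| = n.+2, sj \in K, #|sj| = n.+2 &
        f sj - t0 = f si + t0] /\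
    (* (1) *) (Delta1 = si \/ Delta1 = sj) /\
    (* (2) *) (forall s, s < t0 ->
                 maximal_in (sublevel K f (f Delta1 + 2 * s)) Delta1) /\
    (forall t : R, D t -> t0 < t ->
       ((fun x => (#|Sig x|)%:R : R) x @[x --> t0^'+] --> ((#|Sig t|)%:R : R)) ->
       (* (3) *) (Delta1 = sj ->
                  [/\ si \in Sig t, sj \in Sig t & @terminal_simplex V F R K f si]) /\
       (* (4) *) (Delta1 = si ->
                  [/\ si \in Sig t, sj \in Sig t & @birth_simplex V F R K f sj])).
Proof.
move=> HK _ Hfil Hgen _ Hnb _ Hdeath _ _ D Sig Hex t0 Dt0 Hc1 Hmax Delta1 HSig.
have Hinj : injective_on K f by case: Hgen.
have t0pos : 0 < t0 by case/andP: Dt0.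
set P := PP K n.
have PK : forall p, p \in P -> p \in K by move=> p; rewrite inPP => /andP[].
have PS : forall p, p \in P -> #|p| = n.+2 by move=> p; rewrite inPP => /andP[_ /eqP].
have finj : forall p q, p \in P -> q \in P -> f p = f q -> p = q.
  by move=> p q Hp Hq; apply: Hinj; apply: PK.
have HS0 : forall tau, tau \in Sig t0 -> tau = Delta1.
  by move=> tau; rewrite HSig inE => /eqP.
have AdmT : forall tau L, Adm K n alpha f t0 tau L -> tau = Delta1.
  by move=> tau L HA; apply: HS0; apply: Adm_Sig HA.
have K0 : ~ Kill alpha finset.set0.
  move=> K0; apply: Hnb; apply/bnd_Kill; apply: Kill_mono K0.
  by apply/fintype.subsetP => p; rewrite inE.
have KP : Kill alpha P.
  case: Hdeath => q [_ /bnd_Kill Hq]; apply: Kill_mono Hq.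
  apply/fintype.subsetP => p; rewrite !inE inPP => /andP[/andP[-> _] ->] //.
have [tau1 Ht1 [KD nKD]] := first_kill f KP K0.
have Etau1 : tau1 = Delta1.
  apply: (AdmT tau1 [set p in P | f p < f tau1]); split; split.
  - exact: Ht1.
  - by rewrite inE ltxx andbF.
  - by apply/fintype.subsetP => p; rewrite inE => /andP[].
  - apply: Kill_mono KD; apply/fintype.subsetP => p; rewrite !inE => /andP[Hp].
    by rewrite le_eqVlt => /orP[/eqP/(finj _ _ Hp Ht1)->|->]; rewrite ?eqxx ?Hp ?orbT.
  - exact: nKD.
  - move=> p u Hp Hu Hpl Hul.
    have Hfp : f p <= f tau1.
      by case/orP: Hpl; [rewrite inE => /andP[_ /ltW]|move/eqP->].
    have Hfu : f tau1 <= f u by move: Hul; rewrite inE Hu /= -leNgt.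
    by move: Hfp Hfu t0pos; clra.
subst tau1.
have SigE : forall e tau, 0 < e -> (tau \in Sig e <-> exists L, Adm K n alpha f e tau L).
  move=> e tau e0; split; first exact: Sig_Adm.
  by case=> L HA; apply: Adm_Sig HA.
have D1S : forall e, t0 <= e -> Delta1 \in Sig e.
  move=> e He; apply: (Sig_mono He); move: (HSig); rewrite /Sig => ->; rewrite inE eqxx //.
have [x0 [Dx0 tx0]] : exists x0, D x0 /\ t0 < x0.
  case: Hex => x [Dx Hx]; exists x; split => //; rewrite ltNge; apply/negP => Hxt.
  have : (#|Sig x| <= #|Sig t0|)%N.
    apply: subset_leq_card; apply/fintype.subsetP => tau; exact: Sig_mono.
  by rewrite Hc1 => H; move: (leq_trans Hx H).
have newtau : forall x, D x -> t0 < x -> exists2 tau, tau \in Sig x & tau != Delta1.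
  move=> x Dx tx.
  case: (boolP [exists tau in Sig x, tau != Delta1]).
    by case/existsP => tau /andP[H1 H2]; exists tau.
  move/existsPn => Hall; exfalso.
  have : #|Sig x| = 1%N.
    apply/eqP; rewrite eqn_leq; apply/andP; split.
      rewrite -(cards1 Delta1); apply: subset_leq_card; apply/fintype.subsetP => tau Ht.
      by move: (Hall tau); rewrite Ht /= negbK inE.
    by apply/card_gt0P; exists Delta1; apply: D1S; exact: ltW.
  by move/(Hmax x Dx); rewrite leNgt tx.
pose A2 := [set pu : {set V} * {set V} | (pu.1 \in P) && (pu.2 \in P) &&
                                          (2 * t0 < f pu.1 - f pu.2)]%SET.
have [m m0 Hm] := @ex_pos_lower R _ A2 (fun pu => (f pu.1 - f pu.2) / 2 - t0)
  (fun pu => ltac:(rewrite inE => /andP[_ H]; move: H; clra)).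
have [xs [txs xsx0 xs2 xsm]] : exists xs : R,
    [/\ t0 < xs, xs <= x0, xs <= 2 * t0 & xs <= t0 + m].
  exists (Num.min x0 (Num.min (2 * t0) (t0 + m))); split.
  - by rewrite !lt_min tx0 /=; apply/andP; split; move: t0pos m0; clra.
  - by rewrite ge_min lexx.
  - by rewrite !ge_min lexx orbT.
  - by rewrite !ge_min lexx !orbT.
have Dxs : D xs.
  move: Dx0; rewrite /D => /andP[_ H]; apply/andP; split.
    by move: txs t0pos; clra.
  exact: le_trans xsx0 H.
have Hbig : forall p u, p \in P -> u \in P -> 2 * t0 < f p - f u -> 2 * xs <= f p - f u.
  move=> p u Hp Hu Hpu.
  have : (p, u) \in A2 by rewrite inE Hp Hu Hpu.
  by move/Hm => /=; move: xsm; clra.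
have [tau Htau Htau1] := newtau xs Dxs txs.
have [L HAL] := (SigE xs tau (lt_trans t0pos txs)).1 Htau.
have HAL' := HAL; case: HAL' => -[HtP HtL HLP] [KtL nKL HPL].
have nP0 : ~ Pairs K n f t0 L tau.
  by move=> HP; move/eqP: Htau1; apply; apply: (AdmT tau L); split; split.
have [s2 [s1 [Hs2P Hs1P Hs2L Hs1L Hge]]] : exists p u,
    [/\ p \in P, u \in P, (p \in L) || (p == tau), u \notin L & 2 * t0 <= f p - f u].
  apply: contrapT => Hne; apply: nP0 => p u Hp Hu Hpl Hul.
  by rewrite ltNge; apply/negP => Hle; apply: Hne; exists p, u; split.
have Hlt : f s2 - f s1 < 2 * xs by apply: HPL.
have Heq : f s2 - f s1 = 2 * t0.
  have : ~~ (2 * t0 < f s2 - f s1).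
    by apply/negP => /(Hbig _ _ Hs2P Hs1P); move: Hlt; clra.
  by rewrite -leNgt; move: Hge; clra.
have s12 : s1 != s2 by apply/eqP => E; move: Heq t0pos; rewrite E; clra.
have Uniq : forall p u, p \in P -> u \in P -> f p - f u = 2 * t0 -> p = s2 /\ u = s1.
  move=> p u Hp Hu Hpu.
  have pu : p != u by apply/eqP => E; move: Hpu t0pos; rewrite E; clra.
  case: Hgen => _ /(_ p u s2 s1 (PK _ Hp) (PK _ Hu) (PK _ Hs2P) (PK _ Hs1P) pu).
  rewrite eq_sym s12 => /(_ isT); rewrite Hpu Heq => /(_ erefl).
  case=> // -[Ep Eu]; exfalso; move: Heq Hpu t0pos; rewrite Ep Eu; clra.
have gap : forall p u, p \in P -> u \in P -> f p - f u < 2 * xs ->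
    f p - f u < 2 * t0 \/ (p = s2 /\ u = s1).
  move=> p u Hp Hu Hpu.
  case: (ltP (f p - f u) (2 * t0)) => H; first by left.
  right; apply: Uniq => //.
  have : ~~ (2 * t0 < f p - f u).
    by apply/negP => /(Hbig _ _ Hp Hu); move: Hpu; clra.
  by rewrite -leNgt; move: H; clra.
have Hs2L' : (s2 \in L) || (s2 == tau) := Hs2L.
have HP0 : forall p u, p \in P -> u \in P -> (p \in L) || (p == tau) -> u \notin L ->
    ~ (p = s2 /\ u = s1) -> f p - f u < 2 * t0.
  move=> p u Hp Hu Hpl Hul Hn.
  by case: (gap p u Hp Hu (HPL p u Hp Hu Hpl Hul)).
have HPs1 : forall u, u \in P -> u \notin L -> f s1 - f u < 2 * t0.
  move=> u Hu Hul; have := HPL s2 u Hs2P Hu Hs2L Hul.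
  by move: Heq xs2; clra.
have HPs2 : forall p, p \in P -> (p \in L) || (p == tau) -> f p - f s2 < 2 * t0.
  move=> p Hp Hpl; have := HPL p s1 Hp Hs1P Hpl Hs1L.
  by move: Heq xs2; clra.
have HPgen : forall (L' : {set {set V}}) (tg : {set V}),
    (forall p, p \in P -> (p \in L') || (p == tg) -> [|| p \in L, p == tau | p == s1]) ->
    (forall u, u \in P -> u \notin L' -> (u \notin L) || (u == s2)) ->
    ~ (((s2 \in L') || (s2 == tg)) /\ s1 \notin L') ->
    Pairs K n f t0 L' tg.
  move=> L' tg H1 H2 H3 p u Hp Hu Hpl Hul.
  case: (eqVneq p s1) => [->|ps1].
    case: (eqVneq u s2) => [->|us2]; first by move: Heq t0pos; clra.
    apply: HPs1 => //; move: (H2 u Hu Hul); by rewrite (negbTE us2) orbF.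
  have HpL : (p \in L) || (p == tau).
    by move: (H1 p Hp Hpl); rewrite (negbTE ps1) orbF.
  case: (eqVneq u s2) => [->|us2]; first exact: HPs2.
  have HuL : u \notin L by move: (H2 u Hu Hul); rewrite (negbTE us2) orbF.
  apply: HP0 => // -[Ep Eu]; apply: H3; split.
    by rewrite -Ep.
  by rewrite -Eu.
have LP : forall p, p \in L -> p \in P by move=> p; apply: (fintype.subsetP HLP).
have s2tau_L : s2 \in L -> s2 != tau.
  by move=> H; apply/eqP => E; move: HtL; rewrite -E H.
have D12 : Delta1 = s1 \/ Delta1 = s2.
  case/orP: Hs2L' => Hs2.
  -
    have s2t := s2tau_L Hs2.
    have nK1 : ~ Kill alpha (tau |: (L :\ s2)).
      move=> KK; move/eqP: Htau1; apply; apply: (AdmT tau (L :\ s2)); split; split.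
      + exact: HtP.
      + by rewrite finset.in_setD (negbTE HtL) andbF.
      + by apply/fintype.subsetP => p; rewrite finset.in_setD => /andP[_ /LP].
      + exact: KK.
      + by move=> H; apply: nKL; apply: Kill_mono H; apply: finset.subsetDl.
      + apply: HPgen.
        * by move=> p _; rewrite !inE => /orP[/andP[_ ->]|->] //; rewrite orbT.
        * by move=> u _; rewrite !inE negb_and negbK orbC.
        * by rewrite !inE eqxx (negbTE s2t) => -[].
    case: (eqVneq s1 tau) => [Es1|Ns1].
    + right; symmetry; apply: (AdmT s2 (tau |: (L :\ s2))); split; split.
      * exact: Hs2P.
      * by rewrite !inE eqxx (negbTE s2t).
      * apply/fintype.subsetP => p; rewrite !inE => /orP[/eqP->//|/andP[_ /LP]] //.
      * apply: Kill_mono KtL; apply/fintype.subsetP => p; rewrite !inE.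
        by case: (eqVneq p s2) => [->|] //= ->; rewrite orbT.
      * exact: nK1.
      * apply: HPgen.
        -- by move=> p _; rewrite !inE => /orP[/orP[->|/andP[_ ->]]|/eqP->]; rewrite ?orbT ?Hs2.
        -- by move=> u _; rewrite !inE negb_or negb_and negbK => /andP[_ /orP[->|->]];
             rewrite ?orbT.
        -- by rewrite !inE Es1 !eqxx /= ?orbT => -[].
    + case: (pselect (Kill alpha (s1 |: (tau |: (L :\ s2))))) => KK.
      * left; symmetry; apply: (AdmT s1 (tau |: (L :\ s2))); split; split.
        -- exact: Hs1P.
        -- by rewrite !inE (negbTE Ns1) (negbTE Hs1L) andbF.
        -- apply/fintype.subsetP => p; rewrite !inE => /orP[/eqP->//|/andP[_ /LP]] //.
        -- exact: KK.
        -- exact: nK1.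
        -- apply: HPgen.
           ++ move=> p _; rewrite !inE => /orP[/orP[->//|/andP[_ ->]]|->] //;
                rewrite ?orbT //.
           ++ by move=> u _; rewrite !inE negb_or negb_and negbK => /andP[_ /orP[->|->]];
                rewrite ?orbT.
           ++ by rewrite !inE (negbTE s2t) eqxx /= (eq_sym s2 s1) (negbTE s12) => -[].
      * right; symmetry; apply: (AdmT s2 (s1 |: (tau |: (L :\ s2)))); split; split.
        -- exact: Hs2P.
        -- by rewrite !inE eqxx (negbTE s2t) eq_sym (negbTE s12).
        -- apply/fintype.subsetP => p; rewrite !inE.
           by move=> /orP[/eqP->//|/orP[/eqP->//|/andP[_ /LP]]].
        -- apply: Kill_mono KtL; apply/fintype.subsetP => p; rewrite !inE.
           move=> /orP[/eqP->|HpL]; first by rewrite eqxx !orbT.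
           case: (eqVneq p s2) => [Eps|ps2]; first by rewrite Eps.
           by rewrite HpL !orbT.
        -- exact: KK.
        -- apply: HPgen.
           ++ move=> p _; rewrite !inE => /orP[/orP[->|/orP[->|/andP[_ ->]]]|/eqP->];
                rewrite ?orbT ?Hs2 //.
           ++ move=> u _; rewrite !inE !negb_or negb_and negbK.
              by move=> /and3P[_ _ /orP[->|->]]; rewrite ?orbT.
           ++ by rewrite !inE !eqxx /= ?orbT => -[].
  -
    move/eqP: Hs2 => Es2.
    have s1t : s1 != tau by rewrite -Es2.
    case: (pselect (Kill alpha (s1 |: L))) => KK.
    + left; symmetry; apply: (AdmT s1 L); split; split => //.
      apply: HPgen.
      * by move=> p _ /orP[->|->]; rewrite ?orbT.
      * by move=> u _ ->.
      * by rewrite Es2 (negbTE HtL) /= eq_sym (negbTE s1t) => -[].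
    + exfalso; move/eqP: Htau1; apply; apply: (AdmT tau (s1 |: L)); split; split.
      * exact: HtP.
      * by rewrite !inE eq_sym (negbTE s1t) (negbTE HtL).
      * by apply/fintype.subsetP => p; rewrite !inE => /orP[/eqP->//|/LP].
      * apply: Kill_mono KtL; apply/fintype.subsetP => p; rewrite !inE.
        by case/orP => ->; rewrite ?orbT.
      * exact: KK.
      * apply: HPgen.
        -- move=> p _; rewrite !inE => /orP[/orP[->|->]|->]; rewrite ?orbT //.
        -- by move=> u _; rewrite !inE negb_or => /andP[_ ->].
        -- by rewrite !inE eqxx /= => -[].
have Hmaxi : forall s, s < t0 -> maximal_in (sublevel K f (f Delta1 + 2 * s)) Delta1.
  move=> s Hs t; rewrite inE => /andP[HtK Hft] /properP [Dt [v Hvt HvD]].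
  set c := v |: Delta1.
  have Hct : c \subset t by rewrite /c finset.subUset finset.sub1set Hvt Dt.
  have HcK : c \in K.
    apply: HK.2 HtK Hct _; apply/set0Pn; exists v; by rewrite /c !inE eqxx.
  have Hfc : f c <= f t by apply: Hfil.
  have Hcard : #|c| = n.+3 by rewrite /c cardsU1 HvD (PS _ Ht1).
  pose E := bd (elem F c).
  have HE : forall t', bd E t' = 0 by move=> t'; exact: bdbd.
  have EE : forall t', E t' = incidence F c t' by move=> t'; rewrite /E bd_elem ffunE.
  have ED : E Delta1 != 0.
    rewrite EE /incidence (big_pred1 v).
      by rewrite expf_neq0 // oppr_eq0 oner_eq0.
    move=> u /=; case: (eqVneq u v) => [->|uv].
      by rewrite /c setU11 /= setU1K // eqxx.
    apply/negP => /andP[Huc /eqP Eu].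
    have : u \in Delta1 by move: Huc; rewrite /c !inE (negbTE uv).
    by rewrite Eu !inE eqxx.
  have Esupp : forall w, E w != 0 -> exists2 u, u \in c & w = c :\ u.
    move=> w; rewrite EE /incidence => Hw.
    case: (boolP [exists u, (u \in c) && (w == c :\ u)]).
      by case/existsP => u /andP[Hu /eqP ->]; exists u.
    move/existsPn => Hn; exfalso; move: Hw; rewrite big_pred0 ?eqxx //.
    by move=> u; apply/negbTE/Hn.
  have faceP : forall u, u \in c -> c :\ u \in P.
    move=> u Hu; rewrite inPP; apply/andP; split.
      apply: HK.2 HcK (finset.subsetDl _ _) _.
      apply/set0Pn.
      have : (0 < #|c :\ u|)%N by move: (cardsD1 u c); rewrite Hu Hcard add1n => -[<-].
      by case/card_gt0P => x Hx; exists x.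
    by move: (cardsD1 u c); rewrite Hu Hcard add1n => -[<-].
  have [S2 [KS2 S2P S2D S2f S2lo]] : exists S2 : {set {set V}},
      [/\ Kill alpha S2, S2 \subset P, Delta1 \notin S2,
          forall w, w \in S2 -> f w < f Delta1 \/ f w <= f c &
          forall p, p \in P -> f p < f Delta1 -> p \in S2].
    exists (([set p in P | f p <= f Delta1] :|: [set t | E t != 0]) :\ Delta1); split.
    - exact: Kill_subst HE ED KD.
    - apply/fintype.subsetP => w; rewrite !inE => /andP[_ /orP[/andP[-> _]//|Hw]].
      by have [u Hu ->] := Esupp w Hw; apply: faceP.
    - by rewrite !inE eqxx.
    - move=> w; rewrite !inE => /andP[wD /orP[/andP[Hw Hfw]|Hw]].
        left; rewrite lt_neqAle Hfw andbT; apply/eqP => E'.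
        by move: wD; rewrite (finj _ _ Hw Ht1 E') eqxx.
      right; have [u Hu ->] := Esupp w Hw; apply: Hfil => //.
        exact: PK (faceP u Hu).
      exact: finset.subsetDl.
    - move=> p Hp Hfp; rewrite !inE Hp (ltW Hfp) /= andbT.
      by apply/eqP => E'; move: Hfp; rewrite E' ltxx.
  have S2P' : forall w, w \in S2 -> w \in P by move=> w; apply: (fintype.subsetP S2P).
  have [w Hw [Kw nKw]] := first_kill f KS2 K0.
  case: (ltP (f w) (f Delta1)) => Hwlt.
    apply: nKD; apply: Kill_mono Kw; apply/fintype.subsetP => p; rewrite !inE.
    move=> /andP[Hp Hfp]; rewrite (S2P' _ Hp) /=; exact: le_lt_trans Hfp Hwlt.
  have Hfwc : f w <= f c.
    case: (S2f w Hw) => // H; move: H Hwlt; clra.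
  have wD : w != Delta1 by apply/eqP => E'; move: S2D; rewrite -E' Hw.
  move/eqP: wD; apply; apply: (AdmT w [set p in S2 | f p < f w]); split; split.
  - exact: S2P'.
  - by rewrite inE ltxx andbF.
  - by apply/fintype.subsetP => p; rewrite inE => /andP[/S2P'].
  - apply: Kill_mono Kw; apply/fintype.subsetP => p; rewrite !inE => /andP[Hp].
    rewrite le_eqVlt => /orP[/eqP/(finj _ _ (S2P' _ Hp) (S2P' _ Hw))->|->].
      by rewrite eqxx.
    by rewrite Hp orbT.
  - exact: nKw.
  - move=> p u Hp Hu Hpl Hul.
    have Hfp : f p <= f w.
      by case/orP: Hpl; [rewrite inE => /andP[_ /ltW]|move/eqP->].
    case: (leP (f w) (f u)) => Hwu; first by move: Hfp Hwu t0pos; clra.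
    have HuS : u \notin S2 by move: Hul; rewrite inE Hwu andbT.
    have Hfu : f Delta1 <= f u.
      case: (eqVneq u Delta1) => [->|uD]; first exact: lexx.
      rewrite leNgt; apply/negP => Hlt'; apply: (negP HuS).
      exact: S2lo.
    move: HtK Hft Hfc Hfp Hfwc Hfu Hs; clra.
have Hs1K := PK _ Hs1P; have Hs2K := PK _ Hs2P.
have fs12 : f s1 < f s2 by move: Heq t0pos; clra.
exists s1, s2; split.
  by split; [exact: Hs1K|exact: PS|exact: Hs2K|exact: PS|move: Heq; clra].
split; first by case: D12 => [->|->]; [left|right].
split; first exact: Hmaxi.
move=> t Dt tt0 _.
have t0t : 0 < t by move: tt0 t0pos; clra.
split.
-
  move=> E2.
  have Hs2Lin : s2 \in L.
    by case/orP: Hs2L => // /eqP E'; exfalso; move/eqP: Htau1; apply; rewrite -E' E2.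
  set B := [set p in P | f p < f s1].
  have BL : B \subset L.
    apply/fintype.subsetP => p; rewrite inE => /andP[Hp Hfp].
    apply/negPn/negP => HpL.
    case: (gap s2 p Hs2P Hp (HPL s2 p Hs2P Hp Hs2L HpL)).
      by move: Heq Hfp; clra.
    by case=> _ Ep; move: Hfp; rewrite Ep ltxx.
  have nK2B : ~ Kill alpha (s2 |: B).
    move=> H; apply: nKL; apply: Kill_mono H.
    by rewrite finset.subUset finset.sub1set Hs2Lin BL.
  rewrite E2 in KD nKD.
  pose rho := fun p => if p == s2 then f s1 else f p.
  have [w Hw [Kw nKw]] := first_kill rho KD K0.
  move: (Hw); rewrite inE => /andP[HwP Hfw].
  case: (ltgtP (rho w) (f s1)) => Hrw.
  + exfalso; apply: nKD; apply: Kill_mono Kw; apply/fintype.subsetP => p.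
    rewrite !inE => /andP[/andP[Hp _] Hrp]; rewrite Hp /=.
    move: Hrp; rewrite {1}/rho; case: (eqVneq p s2) => [Ep|ps2].
      by move: Hrw; clra.
    by move: Hrw fs12; clra.
  + exfalso.
    have ws2 : w != s2 by apply/eqP => Ew; move: Hrw; rewrite /rho Ew eqxx ltxx.
    have Erw : rho w = f w by rewrite /rho (negbTE ws2).
    move/eqP: ws2; apply; rewrite -E2.
    apply: (AdmT w [set p in [set p in P | f p <= f s2] | rho p < rho w]); split; split.
    * exact: HwP.
    * by rewrite inE ltxx andbF.
    * by apply/fintype.subsetP => p; rewrite !inE => /andP[/andP[]].
    * apply: Kill_mono Kw; apply/fintype.subsetP => p; rewrite !inE.
      move=> /andP[/andP[Hp Hfp] Hrp]; move: Hrp; rewrite le_eqVlt => /orP[/eqP Erp|->].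
        have ps2 : p != s2 by apply/eqP => Ep; move: Hrw; rewrite -Erp Ep /rho eqxx ltxx.
        move: Erp; rewrite Erw /rho (negbTE ps2) => /(finj _ _ Hp HwP) ->.
        by rewrite eqxx.
      by rewrite Hp Hfp orbT.
    * exact: nKw.
    * move=> p u Hp Hu Hpl Hul.
      have Hrp : rho p <= rho w.
        by case/orP: Hpl; [rewrite !inE => /andP[_ /ltW]|move/eqP->].
      have us2 : u != s2.
        apply/eqP => Eu; move: Hul; rewrite Eu !inE Hs2P lexx /= /rho eqxx.
        by rewrite Hrw.
      have Hfu : f w <= f u.
        move: Hul; rewrite !inE Hu /= -Erw.
        case: (leP (f u) (f s2)) => Hu2 /=.
          by rewrite -leNgt /rho (negbTE us2).
        by move=> _; rewrite Erw; move: Hfw Hu2; clra.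
      move: Hrp; rewrite Erw {1}/rho; case: (eqVneq p s2) => [Ep|ps2].
        by rewrite Ep => _; move: Hrw Hfu Heq; rewrite Erw; clra.
      by move=> H; move: H Hfu t0pos; clra.
  +
    have K3 : Kill alpha (s1 |: (s2 |: B)).
      apply: Kill_mono Kw; apply/fintype.subsetP => p; rewrite !inE.
      move=> /andP[/andP[Hp Hfp]]; rewrite Hrw /rho.
      case: (eqVneq p s2) => [Ep|ps2]; first by move=> _; case: (p == s1).
      rewrite le_eqVlt => /orP[/eqP/(finj _ _ Hp Hs1P)->|Hlt2]; first by rewrite eqxx.
      by rewrite Hp Hlt2 !orbT.
    split.
    * apply/(SigE t s1 t0t); exists (s2 |: B); split; split.
      -- exact: Hs1P.
      -- by rewrite !inE (negbTE s12) ltxx andbF.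
      -- by apply/fintype.subsetP => p; rewrite !inE => /orP[/eqP->//|/andP[]].
      -- exact: K3.
      -- exact: nK2B.
      -- move=> p u Hp Hu Hpl Hul.
         have Hfu : f s1 <= f u.
           by move: Hul; rewrite !inE Hu /= negb_or -leNgt => /andP[_].
         have us2 : u != s2 by move: Hul; rewrite !inE negb_or => /andP[].
         move: Hpl; rewrite !inE => /orP[/orP[/eqP->|/andP[_ Hfp]]|/eqP->].
         ++ by move: Hfu Heq tt0; clra.
         ++ by move: Hfu Hfp t0t; clra.
         ++ by move: Hfu t0t; clra.
    * by rewrite -E2; apply: D1S; exact: ltW.
    * move=> Hbirth; move: Hbirth; rewrite /birth_simplex (PS _ Hs1P) /=.
      case=> d2 [Hd2 Hbd2].
      have d2B : forall p, d2 p != 0 -> p \in B.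
        move=> p /Hd2 [Hp Hsz]; move: Hp; rewrite inE => /andP[HpK Hfp].
        by rewrite inE inPP HpK Hsz eqxx Hfp.
      pose EE := [ffun p => elem F s1 p - 1 * d2 p].
      have HEE : forall p, bd EE p = 0.
        by move=> p; rewrite bd_comb ffunE Hbd2 mul1r subrr.
      have EEs1 : EE s1 != 0.
        rewrite ffunE /elem ffunE eqxx mul1r.
        have -> : d2 s1 = 0.
          by apply/eqP; apply/negP => /negP/d2B; rewrite inE ltxx andbF.
        by rewrite subr0 oner_eq0.
      apply: nK2B; apply: Kill_mono (Kill_subst HEE EEs1 K3).
      apply/fintype.subsetP => p; rewrite !inE => /andP[ps1 /orP[]].
        by rewrite (negbTE ps1) /= => ->.
      rewrite ffunE /elem ffunE (negbTE ps1) /= mul1r sub0r oppr_eq0 => /d2B.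
      by rewrite inE => ->; rewrite orbT.
-
  move=> E1.
  have tau1 : tau != s1 by rewrite -E1.
  set T := [set p in P | f p <= f s2] :\ s1.
  have LT : tau |: L \subset T.
    apply/fintype.subsetP => p; rewrite !inE => Hpl.
    have Hp : p \in P by case/orP: Hpl => [/eqP->//|/LP].
    have ps1 : p != s1.
      apply/eqP => Ep; move: Hpl; rewrite Ep (negbTE Hs1L) orbF eq_sym.
      by rewrite (negbTE tau1).
    rewrite ps1 Hp /=.
    have Hpl' : (p \in L) || (p == tau) by rewrite orbC.
    case: (gap p s1 Hp Hs1P (HPL p s1 Hp Hs1P Hpl' Hs1L)).
      by move=> H; move: H Heq; clra.
    by case=> -> _; exact: lexx.
  have KT : Kill alpha T by apply: Kill_mono KtL.
  have TP : forall p, p \in T -> [/\ p \in P, p != s1 & f p <= f s2].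
    by move=> p; rewrite !inE => /andP[-> /andP[-> ->]].
  rewrite E1 in KD nKD.
  have [w Hw [Kw nKw]] := first_kill f KT K0.
  have [HwP ws1 Hfw] := TP w Hw.
  case: (ltP (f w) (f s1)) => Hws1.
    exfalso; apply: nKD; apply: Kill_mono Kw; apply/fintype.subsetP => p.
    rewrite !inE => /andP[/andP[_ /andP[Hp _]] Hfp]; rewrite Hp /=.
    exact: le_lt_trans Hfp Hws1.
  have Hws1' : f s1 < f w.
    rewrite lt_neqAle Hws1 andbT; apply/eqP => E'.
    by move: ws1; rewrite (finj _ _ HwP Hs1P (esym E')) eqxx.
  case: (eqVneq w s2) => [Ew|ws2]; last first.
    exfalso.
    have Hws2 : f w < f s2.
      rewrite lt_neqAle Hfw andbT; apply/eqP => E'.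
      by move: ws2; rewrite (finj _ _ HwP Hs2P E') eqxx.
    move/eqP: ws1; apply; rewrite -E1.
    apply: (AdmT w [set p in T | f p < f w]); split; split.
    * exact: HwP.
    * by rewrite inE ltxx andbF.
    * by apply/fintype.subsetP => p; rewrite inE => /andP[/TP[]].
    * apply: Kill_mono Kw; apply/fintype.subsetP => p; rewrite !inE.
      move=> /andP[HpT]; rewrite le_eqVlt => /orP[/eqP Efp|->].
        have Hp : p \in P by case/and3P: HpT.
        by rewrite (finj _ _ Hp HwP Efp) eqxx.
      by rewrite HpT orbT.
    * exact: nKw.
    * move=> p u Hp Hu Hpl Hul.
      have Hfp : f p <= f w.
        by case/orP: Hpl; [rewrite inE => /andP[_ /ltW]|move/eqP->].
      case: (eqVneq u s1) => [->|us1].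
        by move: Hfp Hws2 Heq; clra.
      have Hfu : f w <= f u.
        move: Hul; rewrite !inE Hu us1 /=.
        case: (leP (f u) (f s2)) => Hu2 /=; first by rewrite -leNgt.
        by move=> _; move: Hws2 Hu2; clra.
      by move: Hfp Hfu t0pos; clra.
  subst w.
  split.
  + by rewrite -E1; apply: D1S; exact: ltW.
  + apply/(SigE t s2 t0t); exists [set p in T | f p < f s2]; split; split.
    * exact: Hs2P.
    * by rewrite inE ltxx andbF.
    * by apply/fintype.subsetP => p; rewrite inE => /andP[/TP[]].
    * apply: Kill_mono Kw; apply/fintype.subsetP => p; rewrite !inE.
      move=> /andP[HpT Hle].
      have [Efp|Hlt2] : f p = f s2 \/ f p < f s2.
        by move: Hle; rewrite le_eqVlt => /orP[/eqP|]; [left|right].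
        have Hp : p \in P by case/and3P: HpT.
        by rewrite (finj _ _ Hp Hs2P Efp) eqxx.
      by rewrite HpT Hlt2 orbT.
    * exact: nKw.
    * move=> p u Hp Hu Hpl Hul.
      have Hfp : f p <= f s2.
        by case/orP: Hpl; [rewrite inE => /andP[_ /ltW]|move/eqP->].
      case: (eqVneq u s1) => [->|us1].
        by move: Hfp Heq tt0; clra.
      have Hfu : f s2 <= f u.
        move: Hul; rewrite !inE Hu us1 /=.
        case: (leP (f u) (f s2)) => Hu2 /=; first by rewrite -leNgt.
        by move=> _; move: Hu2; clra.
      by move: Hfp Hfu t0t; clra.
  +
    rewrite /birth_simplex (PS _ Hs2P) /=.
    case: Kw => d [Hd Hbd]; case: KD => d1 [Hd1 Hbd1].
    have ds2 : d s2 != 0.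
      apply/negP => /eqP H0; apply: nKw; exists d; split => // p Hp.
      have := Hd p Hp; rewrite !inE => /andP[HpT Hle]; rewrite HpT /=.
      rewrite lt_neqAle Hle andbT; apply/eqP => Efp.
      have HpP : p \in P by case/and3P: HpT.
      by move: Hp; rewrite (finj _ _ HpP Hs2P Efp) H0 eqxx.
    have d1s2 : d1 s2 = 0.
      apply/eqP/negPn/negP => H; have := Hd1 _ H; rewrite inE => /andP[_ Hle].
      by move: Hle fs12; clra.
    pose e := [ffun p => d p - 1 * d1 p].
    have bde : forall p, bd e p = 0.
      by move=> p; rewrite bd_comb ffunE Hbd Hbd1 mul1r subrr.
    have es2 : e s2 = d s2 by rewrite ffunE d1s2 mulr0 subr0.
    exists [ffun p => elem F s2 p - (1 / e s2) * e p]; split.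
    * move=> p; rewrite ffunE /elem ffunE.
      case: (eqVneq p s2) => [->|ps2].
        by rewrite es2 div1r mulVf // subrr eqxx.
      rewrite /= => H.
      have ep : e p != 0 by apply: contraNneq H => ->; rewrite mulr0 subr0.
      have [HpP Hfp] : p \in P /\ f p <= f s2.
        move: ep; rewrite ffunE mul1r.
        case: (eqVneq (d p) 0) => [dp0|dp].
          rewrite dp0 sub0r oppr_eq0 => /Hd1; rewrite inE => /andP[-> Hle].
          by split => //; move: Hle fs12; clra.
        by move=> _; have := Hd p dp; rewrite !inE => /andP[/and3P[_ -> _] ->].
      split; last exact: PS.
      rewrite inE (PK _ HpP) /= lt_neqAle Hfp andbT; apply/eqP => Efp.
      by move: ps2; rewrite (finj _ _ HpP Hs2P Efp) eqxx.
    * by rewrite bd_comb; apply/ffunP => p; rewrite ffunE bde mulr0 subr0.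
Qed.
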